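(* Let $A\in\mathbb{R}^{m\times n}$ have no zero row, with rows $a_1^T,\dots,a_m^T$, let $b\in\mathbb{R}^m$ with $Ax=b$ consistent, and let $x^\dagger$ be the minimum-norm least-squares solution. Let $0<\mu_i<2$ for $1\le i\le m$, ${\bf u}=(\mu_1,\dots,\mu_m)$, $\Lambda=\mathrm{diag}(\mu_1,\dots,\mu_m)$, $M=\mathrm{diag}(1/\|a_1\|_2^2,\dots,1/\|a_m\|_2^2)$, and let $C({\bf u})\in\mathbb{R}^{m\times m}$ be a unit upper triangular matrix with $A_{\mathcal S}({\bf u})=C({\bf u})A$, where $A_{\mathcal S}({\bf u})=(Q_1({\bf u}_1)a_1,\dots,Q_m({\bf u}_m)a_m)^T$, $Q_j({\bf u}_j)=P_m(\mu_m)\cdots P_{j+1}(\mu_{j+1})$ for $j<m$, $Q_m({\bf u}_m)=I$, $P_k(\mu_k)=I-\mu_ka_ka_k^T/\|a_k\|_2^2$. Let $y_0\in\mathbb{R}^n$ and $$y_k=y_{k-1}+A^T[C({\bf u})]^T\Lambda M(b-Ay_{k-1}),\qquad k=1,2,\dots.$$ Then $y_k\to x^\dagger+P_{N(A)}y_0$ as $k\to\infty$.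
   Context: $P_{N(A)}$ is the orthogonal projection onto the null space of $A$. Such a matrix $C({\bf u})$ always exists. *)

(* Defs.v *)
From HB Require Import structures.
From mathcomp Require Import all_boot all_order all_algebra.
From mathcomp Require Import all_classical all_reals all_analysis.
Set Implicit Arguments. Unset Strict Implicit. Unset Printing Implicit Defensive.
Import Order.TTheory GRing.Theory Num.Theory.
Import numFieldNormedType.Exports.
Local Open Scope ring_scope.

Section Defs.
Variables (R : realType) (m n : nat).

Definition norm2sq (k : nat) (v : 'cV[R]_k) : R := \sum_i v i 0 ^+ 2.

Definition rownorm2 (A : 'M[R]_(m, n)) (i : 'I_m) : R := norm2sq (row i A)^T.

Definition Pk (A : 'M[R]_(m, n)) (mu : R) (k : 'I_m) : 'M[R]_n :=
  1%:M - (mu / rownorm2 A k) *: ((row k A)^T *m row k A).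

(* Q_j(u_j) = P_m(mu_m) ... P_{j+1}(mu_{j+1}) (identity if j is the last index) *)
Definition Qj (A : 'M[R]_(m, n)) (u : 'rV[R]_m) (j : 'I_m) : 'M[R]_n :=
  foldr (fun k Q => Pk A (u 0 k) k *m Q) 1%:M
        (rev [seq k <- enum 'I_m | (nat_of_ord j < nat_of_ord k)%N]).

Definition AS (A : 'M[R]_(m, n)) (u : 'rV[R]_m) : 'M[R]_(m, n) :=
  \matrix_(i, l) (Qj A u i *m (row i A)^T) l 0.

Definition unit_upper_triangular (C : 'M[R]_m) : Prop :=
  (forall i, C i i = 1) /\ (forall i j : 'I_m, (j < i)%N -> C i j = 0).

Definition ls_solution (A : 'M[R]_(m, n)) (b : 'cV[R]_m) (x : 'cV[R]_n) : Prop :=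
  forall z, norm2sq (A *m x - b) <= norm2sq (A *m z - b).

Definition min_norm_ls_solution (A : 'M[R]_(m, n)) (b : 'cV[R]_m)
  (x : 'cV[R]_n) : Prop :=
  ls_solution A b x /\ (forall z, ls_solution A b z -> norm2sq x <= norm2sq z).

Definition orth_proj_null (A : 'M[R]_(m, n)) (P : 'M[R]_n) : Prop :=
  forall v : 'cV[R]_n, A *m (P *m v) = 0 /\
    (forall w : 'cV[R]_n, A *m w = 0 -> w^T *m (v - P *m v) = 0).

End Defs.

(* Main.v *)
Set Warnings "-notation-overridden,-ambiguous-paths,-notation-incompatible-prefix".
Require Import Defs.
From HB Require Import structures.
From mathcomp Require Import all_boot all_order all_algebra.
From mathcomp Require Import all_classical all_reals all_analysis.
From mathcomp Require Import ring lra.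
Import Order.TTheory GRing.Theory Num.Theory.
Import numFieldNormedType.Exports.
Set Implicit Arguments. Unset Strict Implicit. Unset Printing Implicit Defensive.
Local Open Scope ring_scope.
Local Open Scope classical_set_scope.
Section Alg.
Variables (R : realType) (m n : nat) (A : 'M[R]_(m, n)) (u : 'rV[R]_m).

Definition an (i : nat) : 'cV[R]_n :=
  match (insub i : option 'I_m) with Some k => (row k A)^T | None => 0 end.
Definition mun (i : nat) : R :=
  match (insub i : option 'I_m) with Some k => u 0 k | None => 0 end.
Definition cn i := mun i / norm2sq (an i).
Definition Pn i : 'M[R]_n := 1%:M - cn i *: (an i *m (an i)^T).
Definition PP a b := foldr (fun k Q => Pn k *m Q) 1%:M (rev (iota a b)).

Lemma an_ord (k : 'I_m) : an k = (row k A)^T.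
Proof. by rewrite /an valK. Qed.
Lemma mun_ord (k : 'I_m) : mun k = u 0 k.
Proof. by rewrite /mun valK. Qed.
Lemma Pn_ord (k : 'I_m) : Pk A (u 0 k) k = Pn k.
Proof. by rewrite /Pn /cn /Pk an_ord mun_ord trmxK. Qed.

Lemma foldr_mulE (s : seq nat) (M : 'M[R]_n) :
  foldr (fun k Q => Pn k *m Q) M s = foldr (fun k Q => Pn k *m Q) 1%:M s *m M.
Proof. elim: s => [|x s IH] /=; first by rewrite mul1mx. by rewrite IH mulmxA. Qed.

Lemma PPSr a b : PP a b.+1 = Pn (a + b) *m PP a b.
Proof. by rewrite /PP -addn1 iotaD rev_cat /=. Qed.

Lemma PPSl a b : PP a b.+1 = PP a.+1 b *m Pn a.
Proof. by rewrite /PP /= rev_cons -cats1 foldr_cat /= mulmx1 foldr_mulE. Qed.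

Lemma PP0 a : PP a 0 = 1%:M.
Proof. by []. Qed.

Lemma PP_tele a b : 1%:M - PP a b =
  \sum_(j < b) PP (a + j).+1 (b - j.+1) *m (1%:M - Pn (a + j)).
Proof.
elim: b a => [|b IH] a; first by rewrite big_ord0 PP0 subrr.
rewrite big_ord_recl /= addn0 subSS subn0 PPSl.
have -> : 1%:M - PP a.+1 b *m Pn a =
   (1%:M - PP a.+1 b) + PP a.+1 b *m (1%:M - Pn a).
  by move: (PP a.+1 b) (Pn a) => X Y; rewrite mulmxBr mulmx1 addrA subrK.
rewrite IH addrC; congr (_ + _); apply: eq_bigr => j _.
by rewrite /bump /= add1n subSS addSnnS.
Qed.

Lemma filter_iota_ge (a k : nat) : (a <= k)%N ->
  [seq x <- iota 0 k | (a <= x)%N] = iota a (k - a).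
Proof.
move=> ak; rewrite -{1}(subnKC ak) iotaD filter_cat add0n.
rewrite (eq_in_filter (a2 := pred0)); last first.
  by move=> x; rewrite mem_iota add0n => /andP[_ xa]; rewrite /= leqNgt xa.
rewrite filter_pred0 /= (eq_in_filter (a2 := predT)); last first.
  by move=> x; rewrite mem_iota => /andP[-> _].
by rewrite filter_predT.
Qed.

Lemma Qj_PP (j : 'I_m) : Qj A u j = PP j.+1 (m - j.+1).
Proof.
rewrite /Qj /PP.
have -> : (fun (k : 'I_m) (Q : 'M[R]_n) => Pk A (u 0 k) k *m Q) = (fun (k : 'I_m) Q => Pn k *m Q).
  by apply: funext => k; apply: funext => Q; rewrite Pn_ord.
rewrite -(foldr_map val (fun k Q => Pn k *m Q)) map_rev; congr foldr; congr rev.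
rewrite -filter_map val_enum_ord; exact: filter_iota_ge.
Qed.

End Alg.
Lemma trmx_diag_sum (R : realType) (p q k : nat) (X : 'M[R]_(k, p)) (d : 'rV[R]_k)
  (Y : 'M[R]_(k, q)) :
  X^T *m diag_mx d *m Y = \sum_i d 0 i *: ((row i X)^T *m row i Y).
Proof.
apply/matrixP => a b; rewrite summxE !mxE; apply: eq_bigr => i _.
rewrite mul_mx_diag !mxE big_ord1 !mxE; ring.
Qed.

Lemma E_eq (R : realType) (m n : nat) (A : 'M[R]_(m, n)) (u : 'rV[R]_m) (C : 'M[R]_m) :
  AS A u = C *m A ->
  A^T *m C^T *m diag_mx u *m diag_mx (\row_i (rownorm2 A i)^-1) *m A
  = 1%:M - PP A u 0 m.
Proof.
move=> hAS; rewrite -trmx_mul -hAS -[_ *m diag_mx _ *m diag_mx _]mulmxA mulmx_diag trmx_diag_sum PP_tele.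
apply: eq_bigr => j _; rewrite add0n -Qj_PP /Pn opprB addrC subrK an_ord.
rewrite /cn an_ord mun_ord -scalemxAr mulmxA !mxE; congr (_ *: (_ *m _)).
  by apply/matrixP => a b; rewrite !mxE (ord1 b).
by rewrite trmxK.
Qed.
Section Sweep.
Variables (R : realType) (m n : nat) (A : 'M[R]_(m, n)) (u : 'rV[R]_m).

Definition dot (v w : 'cV[R]_n) : R := \sum_l v l 0 * w l 0.

Lemma trmx_dot (v w : 'cV[R]_n) : v^T *m w = (dot v w)%:M.
Proof.
apply/matrixP => i k; rewrite (ord1 i) (ord1 k) !mxE /= mulr1n.
by apply: eq_bigr => l _; rewrite !mxE.
Qed.

Lemma Pn_apply j (x : 'cV[R]_n) :
  Pn A u j *m x = x - (cn A u j * dot (an A j) x) *: an A j.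
Proof.
rewrite /Pn mulmxBl mul1mx -scalemxAl -mulmxA trmx_dot mul_mx_scalar scalerA.
by rewrite mulrC.
Qed.

Lemma norm_step (x a : 'cV[R]_n) (c : R) :
  norm2sq (x - (c * dot a x) *: a) =
  norm2sq x - (dot a x) ^+ 2 * (2 * c - c ^+ 2 * norm2sq a).
Proof.
rewrite /norm2sq /dot.
under eq_bigr do rewrite !mxE.
set k := c * _.
transitivity (\sum_i (x i 0 ^+ 2) - 2 * k * (\sum_l a l 0 * x l 0)
   + k ^+ 2 * (\sum_i a i 0 ^+ 2)).
  rewrite !mulr_sumr -sumrB -big_split /=; apply: eq_bigr => i _; ring.
rewrite /k; ring.
Qed.

Definition xs (v : 'cV[R]_n) (j : nat) := PP A u 0 j *m v.
Definition ds (v : 'cV[R]_n) (j : nat) := dot (an A j) (xs v j).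
Definition ws (j : nat) := 2 * cn A u j - cn A u j ^+ 2 * norm2sq (an A j).

Lemma xsS v j : xs v j.+1 = xs v j - (cn A u j * ds v j) *: an A j.
Proof. by rewrite /xs PPSr add0n -mulmxA Pn_apply. Qed.

Lemma xs_norm v k :
  norm2sq (xs v k) = norm2sq v - \sum_(j < k) ds v j ^+ 2 * ws j.
Proof.
elim: k => [|k IH]; first by rewrite big_ord0 subr0 /xs PP0 mul1mx.
by rewrite big_ord_recr /= xsS norm_step IH opprD addrA.
Qed.

Lemma xs_sum v k :
  xs v k = v - \sum_(i < k) (cn A u i * ds v i) *: an A i.
Proof.
elim: k => [|k IH]; first by rewrite big_ord0 subr0 /xs PP0 mul1mx.
by rewrite big_ord_recr /= xsS IH opprD addrA.
Qed.

End Sweep.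
Section LinAlg.
Variables (R : realType) (n : nat).

Lemma norm2sq_ge0 (v : 'cV[R]_n) : 0 <= norm2sq v.
Proof. by apply: sumr_ge0 => i _; rewrite sqr_ge0. Qed.

Lemma norm2sq_eq0 (v : 'cV[R]_n) : norm2sq v = 0 -> v = 0.
Proof.
move=> h; apply/matrixP => i j; rewrite (ord1 j) mxE.
have := @psumr_eq0P _ _ predT (fun i => v i 0 ^+ 2) (fun i _ => sqr_ge0 _) h i isT.
by move/eqP; rewrite sqrf_eq0 => /eqP.
Qed.

Lemma norm2sq_dot (v : 'cV[R]_n) : norm2sq v = dot v v.
Proof. by apply: eq_bigr => i _; rewrite expr2. Qed.

Lemma dot_mx (v w : 'cV[R]_n) : dot v w = (v^T *m w) 0 0.
Proof. by rewrite trmx_dot mxE mulr1n. Qed.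

Lemma trmx0_dot (v w : 'cV[R]_n) : v^T *m w = 0 -> dot v w = 0.
Proof. by move=> h; rewrite dot_mx h mxE. Qed.

Lemma dotC (v w : 'cV[R]_n) : dot v w = dot w v.
Proof. by apply: eq_bigr => i _; rewrite mulrC. Qed.

End LinAlg.

Section LinAlg2.
Variables (R : realType) (m n : nat) (A : 'M[R]_(m, n)).

Definition orthN (v : 'cV[R]_n) := forall w : 'cV[R]_n, A *m w = 0 -> w^T *m v = 0.

Lemma orthND v w : orthN v -> orthN w -> orthN (v + w).
Proof. by move=> hv hw z hz; rewrite mulmxDr hv // hw // addr0. Qed.
Lemma orthNN v : orthN v -> orthN (- v).
Proof. by move=> hv z hz; rewrite mulmxN hv // oppr0. Qed.
Lemma orthNAT (s : 'cV[R]_m) : orthN (A^T *m s).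
Proof. by move=> z hz; rewrite mulmxA -trmx_mul hz trmx0 mul0mx. Qed.

Lemma orth_PN0 (PN : 'M[R]_n) v : orth_proj_null A PN -> orthN v -> PN *m v = 0.
Proof.
move=> hP hv; have [h1 h2] := hP v.
have := h2 _ h1; rewrite mulmxBr (hv _ h1) sub0r => /eqP; rewrite oppr_eq0 => /eqP h.
by apply: norm2sq_eq0; rewrite norm2sq_dot trmx0_dot.
Qed.

Lemma PN_ker (PN : 'M[R]_n) (w : 'cV[R]_n) : orth_proj_null A PN -> A *m w = 0 -> PN *m w = w.
Proof.
move=> hP hw; have [h1 h2] := hP w.
have hz : A *m (w - PN *m w) = 0 by rewrite mulmxBr hw h1 subr0.
have := h2 _ hz => /trmx0_dot; rewrite -norm2sq_dot => /norm2sq_eq0 /eqP.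
by rewrite subr_eq0 => /eqP.
Qed.

Lemma factor_PN (PN : 'M[R]_n) : orth_proj_null A PN ->
  exists G : 'M[R]_(n, m), 1%:M - PN = G *m A.
Proof.
move=> hP; apply/submxP; rewrite submxE; apply/eqP/matrixP => i l.
have hc : A *m col l (cokermx A) = 0.
  by rewrite colE mulmxA mulmx_coker mul0mx.
have h0 : (1%:M - PN) *m col l (cokermx A) = 0.
  by rewrite mulmxBl mul1mx PN_ker // subrr.
transitivity ((col l ((1%:M - PN) *m cokermx A)) i 0); first by rewrite !mxE.
by rewrite colE -mulmxA -colE h0 !mxE.
Qed.

End LinAlg2.
Section Ana.
Variable R : realType.

Lemma cvg_sum0 (I : Type) (s : seq I) (f : I -> nat -> R) :
  (forall i, f i n @[n --> \oo] --> 0) ->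
  (\sum_(i <- s) f i k) @[k --> \oo] --> 0.
Proof.
move=> hf; elim: s => [|x s IH].
  have -> : (fun k => \sum_(i <- [::]) f i k) = fun=> 0.
    by apply: funext => k; rewrite big_nil.
  exact: cvg_cst.
have -> : (fun k => \sum_(i <- x :: s) f i k) =
  (fun k => f x k + \sum_(i <- s) f i k).
  by apply: funext => k; rewrite big_cons.
rewrite -[X in _ --> X](addr0 (0:R)). exact: (cvgD (hf x) IH).
Qed.

Lemma sq_cvg0 (f : nat -> R) :
  (f k ^+ 2) @[k --> \oo] --> 0 -> f @ \oo --> 0.
Proof.
move=> /cvgr0Pnorm_lt h; apply/cvgr0Pnorm_lt => e e0.
have := h (e ^+ 2) (exprn_gt0 2 e0); apply: filterS => k.
rewrite normrX => hk; rewrite -(ltr_pXn2r (n:=2)) //; last exact: ltW.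
Qed.

Lemma mx_cvg0 (p q : nat) (f : nat -> 'M[R]_(p, q)) :
  (forall i j, (fun k => f k i j) @ \oo --> (0:R)) -> f @ \oo --> (0 : 'M[R]_(p, q)).
Proof.
move=> h; apply/cvgrPdist_le => /= e e0.
near=> k.
rewrite [leLHS]/Num.Def.normr/= mx_normrE (bigmax_le _ (ltW e0))//= => ij _.
move: ij; near: k; apply: filter_forall => /= ij.
by have /cvgrPdist_le /(_ e e0) := h ij.1 ij.2; apply: filterS => k; rewrite !mxE.
Unshelve. all: by end_near. Qed.

Lemma diff_cvg0 (v : nat -> R) :
  (forall k, v k.+1 <= v k) -> (forall k, 0 <= v k) ->
  (v k - v k.+1) @[k --> \oo] --> 0.
Proof.
move=> hd h0.
have hcv : cvgn v.
  apply: nonincreasing_is_cvgn.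
    by apply/nonincreasing_seqP.
  by exists 0 => _ [k _ <-].
rewrite -(subrr (limn v)); apply: cvgB => //.
by rewrite (cvg_shiftS v).
Qed.

End Ana.
Lemma norm2sq0 (R : realType) (n : nat) : norm2sq (0 : 'cV[R]_n) = 0.
Proof. by rewrite /norm2sq big1 // => i _; rewrite mxE expr0n. Qed.

Lemma dot0l (R : realType) (n : nat) (w : 'cV[R]_n) : dot 0 w = 0.
Proof. by rewrite /dot big1 // => i _; rewrite mxE mul0r. Qed.

Lemma dot_xs (R : realType) (m n : nat) (A : 'M[R]_(m, n)) (u : 'rV[R]_m)
  (a v : 'cV[R]_n) (j : nat) :
  dot a v = dot a (xs A u v j) +
    \sum_(i < j) (cn A u i * ds A u v i) * dot a (an A i).
Proof.
rewrite xs_sum !dot_mx mulmxBr mulmx_sumr.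
under eq_bigr do rewrite -scalemxAr.
move: (a^T *m v) => X.
rewrite [(X - _) 0 0]mxE mxE summxE.
under eq_bigr do rewrite mxE -dot_mx.
by rewrite subrK.
Qed.

Lemma cvg0_scale (R : realType) (f : nat -> R) (a b : R) :
  f @ \oo --> 0 -> (a * f k * b) @[k --> \oo] --> 0.
Proof.
move=> hf; rewrite -(mul0r b) -(mulr0 a).
exact: cvgMr_tmp (cvgMl_tmp hf).
Qed.
Theorem theorem3p12 (R : realType) (m n : nat) (A : 'M[R]_(m, n))
  (b : 'cV[R]_m) (u : 'rV[R]_m) (C : 'M[R]_m) (xd : 'cV[R]_n)
  (PN : 'M[R]_n) (y : nat -> 'cV[R]_n) :
  (forall i : 'I_m, row i A != 0) ->
  (exists x : 'cV[R]_n, A *m x = b) ->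
  min_norm_ls_solution A b xd ->
  (forall i : 'I_m, 0 < u 0 i < 2) ->
  unit_upper_triangular C ->
  AS A u = C *m A ->
  orth_proj_null A PN ->
  (forall k : nat, y k.+1 = y k + A^T *m C^T *m diag_mx u
       *m diag_mx (\row_i (rownorm2 A i)^-1) *m (b - A *m y k)) ->
  y @ \oo --> xd + PN *m y 0%N.
Proof.
move=> hrow [x0 hx0] [hls hmin] hu _ hAS hP hy.
have hAxd : A *m xd = b.
  have := hls x0; rewrite hx0 subrr norm2sq0 => h.
  have h0 : norm2sq (A *m xd - b) = 0 by apply/le_anti; rewrite h norm2sq_ge0.
  by apply/eqP; rewrite -subr_eq0; apply/eqP/norm2sq_eq0.
have hxd : orthN A xd.
  move=> w hw; rewrite trmx_dot.
  set d := dot w xd; set N := norm2sq w; set c := (N + 1)^-1.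
  have hN : 0 <= N by apply: norm2sq_ge0.
  have hc0 : 0 < c by rewrite invr_gt0; lra.
  have hc : c * (N + 1) = 1 by rewrite mulVf //; apply/eqP; lra.
  have hls' : ls_solution A b (xd - (c * d) *: w).
    move=> z'; rewrite mulmxBr -scalemxAr hw scaler0 subr0; exact: hls.
  have := hmin _ hls'; rewrite norm_step -/d -/N.
  have -> : 2 * c - c ^+ 2 * N = c + c ^+ 2.
    have e : c ^+ 2 * N = c * (c * (N + 1)) - c ^+ 2 by ring.
    rewrite e hc; ring.
  move=> hle; have : d ^+ 2 * (c + c ^+ 2) <= 0 by lra.
  rewrite pmulr_lle0; last by rewrite addr_gt0 // exprn_gt0.
  move=> hd; have : d ^+ 2 = 0 by apply/le_anti; rewrite hd sqr_ge0.
  by move/eqP; rewrite sqrf_eq0 => /eqP ->; rewrite raddf0.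
set z := xd + PN *m y 0%N.
have hAz : A *m z = b by rewrite mulmxDr hAxd (hP (y 0%N)).1 addr0.
set F := A^T *m C^T *m diag_mx u *m diag_mx (\row_i (rownorm2 A i)^-1).
have hE : F *m A = 1%:M - PP A u 0 m by exact: E_eq hAS.
pose e k := y k - z.
have he1 : forall k, e k.+1 = e k - F *m (A *m e k).
  move=> k; rewrite /e hy -/F -hAz -mulmxBr -(opprB (y k)) mulmxN mulmxN.
  by rewrite addrAC.
have he : forall k, e k.+1 = xs A u (e k) m.
  move=> k; rewrite he1 /xs mulmxA hE mulmxBl mul1mx.
  by rewrite opprB addrC subrK.
have horth : forall k, orthN A (e k).
  elim => [|k IH].
    rewrite /e /z opprD addrCA; apply: orthND; first exact: orthNN hxd.
    by move=> w hw; exact: (hP (y 0%N)).2.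
  rewrite he1; apply: orthND => //; apply: orthNN.
  rewrite /F -!mulmxA; exact: orthNAT.
have [G hG] := factor_PN hP.
have heG : forall k, e k = G *m (A *m e k).
  by move=> k; rewrite mulmxA -hG mulmxBl mul1mx (orth_PN0 hP (horth k)) subr0.
have hnorm : forall k, norm2sq (e k.+1) =
    norm2sq (e k) - \sum_(j < m) ds A u (e k) j ^+ 2 * ws A u j.
  by move=> k; rewrite he xs_norm.
have hws : forall j : 'I_m, 0 < ws A u j.
  move=> j; rewrite /ws /cn mun_ord.
  have hr : 0 < norm2sq (an A j).
    rewrite lt_def norm2sq_ge0 andbT; apply/eqP => /norm2sq_eq0.
    rewrite an_ord => /(congr1 trmx); rewrite trmxK trmx0; apply/eqP.
    exact: hrow.
  have [hu0 hu2] := andP (hu j).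
  have -> : 2 * (u 0 j / norm2sq (an A j)) -
      (u 0 j / norm2sq (an A j)) ^+ 2 * norm2sq (an A j) =
      (u 0 j / norm2sq (an A j)) * (2 - u 0 j).
    field; apply/eqP; lra.
  by apply: mulr_gt0; [exact: divr_gt0 | rewrite subr_gt0].
have hdec : forall k, 0 <= \sum_(j < m) ds A u (e k) j ^+ 2 * ws A u j.
  by move=> k; apply: sumr_ge0 => j _; apply: mulr_ge0; [exact: sqr_ge0 | exact: ltW].
have hmono : forall k, norm2sq (e k.+1) <= norm2sq (e k).
  by move=> k; have := hnorm k; have := hdec k; lra.
have hD := diff_cvg0 hmono (fun k => norm2sq_ge0 (e k)).
have hds : forall j : nat, (fun k => ds A u (e k) j) @ \oo --> 0.
  move=> j; case: (ltnP j m) => hj.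
    pose jo := Ordinal hj.
    apply: sq_cvg0.
    apply: (@squeeze_cvgr _ _ _ _ (fun=> 0)
       (fun k => (norm2sq (e k) - norm2sq (e k.+1)) * (ws A u jo)^-1)).
    - near=> k; rewrite sqr_ge0 /=.
      rewrite ler_pdivlMr; last exact: (hws jo).
      have -> : norm2sq (e k) - norm2sq (e k.+1) =
           \sum_(j < m) ds A u (e k) j ^+ 2 * ws A u j.
        by rewrite hnorm opprB addrC subrK.
      rewrite (bigD1 jo) //= lerDl; apply: sumr_ge0 => i _.
      by apply: mulr_ge0; [exact: sqr_ge0 | exact: ltW].
    - exact: cvg_cst.
    - by rewrite -(mul0r (ws A u jo)^-1); exact: cvgMr_tmp.
  have -> : (fun k => ds A u (e k) j) = fun=> 0.
    apply: funext => k; rewrite /ds /an insubF ?dot0l //.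
    by apply/negbTE; rewrite -leqNgt.
  exact: cvg_cst.
have hAe : forall j : 'I_m, (fun k => (A *m e k) j 0) @ \oo --> 0.
  move=> j.
  have -> : (fun k => (A *m e k) j 0) = (fun k => ds A u (e k) j +
      \sum_(i < j) (cn A u i * ds A u (e k) i * dot (an A j) (an A i))).
    apply: funext => k; rewrite /ds -dot_xs /dot mxE.
    by apply: eq_bigr => l _; rewrite an_ord !mxE.
  rewrite -[X in _ --> X](addr0 0).
  apply: cvgD; first exact: hds.
  by apply: cvg_sum0 => i; apply: cvg0_scale.
have he0 : forall l, (fun k => e k l 0) @ \oo --> 0.
  move=> l.
  have -> : (fun k => e k l 0) =
     (fun k => \sum_j (G l j * (A *m e k) j 0 * 1)).
    apply: funext => k; rewrite {1}heG mxE.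
    by apply: eq_bigr => i _; rewrite mulr1.
  by apply: cvg_sum0 => j; apply: cvg0_scale.
have ecv : e @ \oo --> (0 : 'cV[R]_n).
  by apply: mx_cvg0 => l j; rewrite (ord1 j); exact: he0.
have -> : y = (fun k => z + e k).
  by apply: funext => k; rewrite /e addrC subrK.
rewrite -[X in _ --> X](addr0 z).
apply: cvgD => //; exact: cvg_cst.
Unshelve. all: by end_near.
Qed.
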